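(* Let $T\in\mathsf{S}^3(V^+)$ be positive (all coordinates strictly positive). Let $u\in V$ with $\|u\|=1$ satisfy $\langle T,u^{\otimes3}\rangle=\rho=\|T\|_\sigma$, and let $$\sigma_2=\min\{|\langle T,u\odot v\odot v\rangle|:\ \langle u,v\rangle=0,\ \|v\|=1\}.$$ If $\sigma_2\ge\rho/2$, then $T$ has a unique best nonnegative symmetric rank-one approximation.
   Context: $V$ is a real vector space of dimension $n$ with a fixed basis, taken orthonormal for the inner product $\langle\cdot,\cdot\rangle$; $V^+$ is the cone of vectors with nonnegative coordinates. $\mathsf{S}^3(V)$ is the space of symmetric 3-tensors and $\mathsf{S}^3(V^+)=\mathsf{S}^3(V)\cap(V^{\otimes3})^+$ the symmetric tensors with nonnegative coordinates. $u\odot v\odot w=\frac16\sum_{\tau}$ (sum of the six tensor products of $u,v,w$ in all orders). The inner product on tensors is the coordinate one and $\|\cdot\|$ the corresponding norm. $\|T\|_\sigma=\max\{|\langle T,u_1\otimes u_2\otimes u_3\rangle|:\|u_i\|=1\}$. A best nonnegative symmetric rank-one approximation of $T$ is a minimizer of $\|T-\lambda x^{\otimes3}\|$ over $\lambda\ge0$, $x\in V^+$ (uniqueness refers to the tensor $\lambda x^{\otimes 3}$). *)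

(* Defs.v *)
From HB Require Import structures.
From mathcomp Require Import all_boot all_order all_algebra.
Set Implicit Arguments. Unset Strict Implicit. Unset Printing Implicit Defensive.
Import Order.TTheory GRing.Theory Num.Theory.
Local Open Scope ring_scope.

(* vectors of V (coordinates in the fixed orthonormal basis) *)
Definition vec (R : rcfType) (n : nat) := 'I_n -> R.
Definition tensor3 (R : rcfType) (n : nat) := 'I_n -> 'I_n -> 'I_n -> R.

Definition dotv (R : rcfType) n (u v : vec R n) : R := \sum_(i < n) u i * v i.
Definition normv (R : rcfType) n (u : vec R n) : R := Num.sqrt (dotv u u).

Definition inner3 (R : rcfType) n (T S : tensor3 R n) : R :=
  \sum_(i < n) \sum_(j < n) \sum_(k < n) T i j k * S i j k.
Definition normT (R : rcfType) n (T : tensor3 R n) : R := Num.sqrt (inner3 T T).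

Definition outer3 (R : rcfType) n (u v w : vec R n) : tensor3 R n :=
  fun i j k => u i * v j * w k.
Definition cube3 (R : rcfType) n (x : vec R n) : tensor3 R n := outer3 x x x.
Definition scaleT (R : rcfType) n (l : R) (T : tensor3 R n) : tensor3 R n :=
  fun i j k => l * T i j k.
Definition subT (R : rcfType) n (T S : tensor3 R n) : tensor3 R n :=
  fun i j k => T i j k - S i j k.

Definition sym3 (R : rcfType) n (u v w : vec R n) : tensor3 R n :=
  fun i j k => 6^-1 * (outer3 u v w i j k + outer3 u w v i j k + outer3 v u w i j k
                      + outer3 v w u i j k + outer3 w u v i j k + outer3 w v u i j k).

Definition symmetric3 (R : rcfType) n (T : tensor3 R n) : Prop :=
  forall i j k, T i j k = T j i k /\ T i j k = T i k j.
Definition positive3 (R : rcfType) n (T : tensor3 R n) : Prop :=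
  forall i j k, 0 < T i j k.
Definition nonneg_vec (R : rcfType) n (x : vec R n) : Prop := forall i, 0 <= x i.

Definition is_spectral_norm (R : rcfType) n (T : tensor3 R n) (rho : R) : Prop :=
  (exists u1 u2 u3 : vec R n,
      [/\ normv u1 = 1, normv u2 = 1, normv u3 = 1 &
          `|inner3 T (outer3 u1 u2 u3)| = rho]) /\
  (forall u1 u2 u3 : vec R n, normv u1 = 1 -> normv u2 = 1 -> normv u3 = 1 ->
      `|inner3 T (outer3 u1 u2 u3)| <= rho).

Definition best_nn_rank1 (R : rcfType) n (T : tensor3 R n) (l : R) (x : vec R n) : Prop :=
  [/\ 0 <= l, nonneg_vec x &
      forall (m : R) (y : vec R n), 0 <= m -> nonneg_vec y ->
        normT (subT T (scaleT l (cube3 x))) <= normT (subT T (scaleT m (cube3 y)))].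

Definition unique_best_nn_rank1 (R : rcfType) n (T : tensor3 R n) : Prop :=
  exists (l : R) (x : vec R n), best_nn_rank1 T l x /\
    forall (m : R) (y : vec R n), best_nn_rank1 T m y ->
      forall i j k, scaleT m (cube3 y) i j k = scaleT l (cube3 x) i j k.

(* Main.v *)
Require Import Defs.
From HB Require Import structures.
From mathcomp Require Import all_boot all_order all_algebra ring lra.
Import Order.TTheory GRing.Theory Num.Theory.
Set Implicit Arguments. Unset Strict Implicit. Unset Printing Implicit Defensive.
Local Open Scope ring_scope.

Definition tri (R : rcfType) n (T : tensor3 R n) (a b c : vec R n) : R :=
  inner3 T (outer3 a b c).

Lemma triE (R : rcfType) n (T : tensor3 R n) a b c :
  tri T a b c = \sum_(i < n) \sum_(j < n) \sum_(k < n) T i j k * (a i * b j * c k).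
Proof. by []. Qed.

Lemma tri_ext (R : rcfType) n (T : tensor3 R n) a a' b c :
  (forall i, a i = a' i) -> tri T a b c = tri T a' b c.
Proof. by move=> h; rewrite !triE; apply eq_bigr => i _; rewrite h. Qed.

Lemma tri_lin1 (R : rcfType) n (T : tensor3 R n) p q a a' b c :
  tri T (fun i => p * a i + q * a' i) b c = p * tri T a b c + q * tri T a' b c.
Proof.
rewrite !triE !mulr_sumr -big_split; apply eq_bigr => i _.
rewrite !mulr_sumr -big_split; apply eq_bigr => j _.
rewrite !mulr_sumr -big_split; apply eq_bigr => k _ /=. ring.
Qed.

Lemma tri_swap12 (R : rcfType) n (T : tensor3 R n) a b c :
  symmetric3 T -> tri T a b c = tri T b a c.
Proof.
move=> hs; rewrite !triE exchange_big; apply eq_bigr => i _; apply eq_bigr => j _.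
apply eq_bigr => k _; rewrite (proj1 (hs j i k)); ring.
Qed.

Lemma tri_swap23 (R : rcfType) n (T : tensor3 R n) a b c :
  symmetric3 T -> tri T a b c = tri T a c b.
Proof.
move=> hs; rewrite !triE; apply eq_bigr => i _; rewrite exchange_big; apply eq_bigr => j _.
apply eq_bigr => k _; rewrite (proj2 (hs i k j)); ring.
Qed.

Lemma dot_lin1 (R : rcfType) n p q (a a' b : vec R n) :
  dotv (fun i => p * a i + q * a' i) b = p * dotv a b + q * dotv a' b.
Proof. rewrite /dotv !mulr_sumr -big_split; apply eq_bigr => i _ /=; ring. Qed.

Lemma dotC (R : rcfType) n (a b : vec R n) : dotv a b = dotv b a.
Proof. by rewrite /dotv; apply eq_bigr => i _; rewrite mulrC. Qed.

Lemma dot_ge0 (R : rcfType) n (a : vec R n) : 0 <= dotv a a.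
Proof. by apply: sumr_ge0 => i _; rewrite -expr2 sqr_ge0. Qed.

Lemma dot_eq0 (R : rcfType) n (a : vec R n) : dotv a a = 0 -> forall i, a i = 0.
Proof.
move=> h i; have := @psumr_eq0P _ _ _ (fun i => a i * a i) _ h i isT.
move=> /(_ (fun j _ => ltac:(rewrite -expr2 sqr_ge0 //))) /eqP.
by rewrite mulf_eq0 orbb => /eqP.
Qed.

Lemma normv_sq (R : rcfType) n (a : vec R n) : normv a ^+ 2 = dotv a a.
Proof. by rewrite /normv sqr_sqrtr // dot_ge0. Qed.


Lemma tri_scale1 (R : rcfType) n (T : tensor3 R n) l a b c :
  tri T (fun i => l * a i) b c = l * tri T a b c.
Proof.
rewrite (@tri_ext _ _ _ _ (fun i => l * a i + 0 * a i)); last by move=> i; ring.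
by rewrite tri_lin1 mul0r addr0.
Qed.

Lemma tri_scale2 (R : rcfType) n (T : tensor3 R n) l a b c : symmetric3 T ->
  tri T a (fun i => l * b i) c = l * tri T a b c.
Proof. by move=> hs; rewrite tri_swap12 // tri_scale1 (tri_swap12 b a c hs). Qed.

Lemma tri_scale3 (R : rcfType) n (T : tensor3 R n) l a b c : symmetric3 T ->
  tri T a b (fun i => l * c i) = l * tri T a b c.
Proof. by move=> hs; rewrite tri_swap23 // tri_scale2 // (tri_swap23 a c b hs). Qed.

Lemma tri_lin2 (R : rcfType) n (T : tensor3 R n) p q a b b' c : symmetric3 T ->
  tri T a (fun i => p * b i + q * b' i) c = p * tri T a b c + q * tri T a b' c.
Proof. by move=> hs; rewrite tri_swap12 // tri_lin1 (tri_swap12 b a c hs) (tri_swap12 b' a c hs). Qed.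

Lemma tri_lin3 (R : rcfType) n (T : tensor3 R n) p q a b c c' : symmetric3 T ->
  tri T a b (fun i => p * c i + q * c' i) = p * tri T a b c + q * tri T a b c'.
Proof. by move=> hs; rewrite tri_swap23 // tri_lin2 // (tri_swap23 a c b hs) (tri_swap23 a c' b hs). Qed.

Lemma tri_zero1 (R : rcfType) n (T : tensor3 R n) a b c :
  (forall i, a i = 0) -> tri T a b c = 0.
Proof.
move=> h; rewrite (@tri_ext _ _ _ _ (fun i => 0 * a i + 0 * a i)); last by move=> i; rewrite h; ring.
by rewrite tri_lin1 !mul0r addr0.
Qed.

Lemma normv_ge0 (R : rcfType) n (a : vec R n) : 0 <= normv a.
Proof. exact: sqrtr_ge0. Qed.

Lemma normv_eq0 (R : rcfType) n (a : vec R n) : normv a = 0 -> forall i, a i = 0.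
Proof. by move=> h; apply: dot_eq0; rewrite -normv_sq h expr0n. Qed.

Lemma dot_scale1 (R : rcfType) n l (a b : vec R n) :
  dotv (fun i => l * a i) b = l * dotv a b.
Proof. by rewrite /dotv mulr_sumr; apply eq_bigr => i _; rewrite mulrA. Qed.

Lemma normv_unit (R : rcfType) n (a : vec R n) : normv a != 0 ->
  normv (fun i => (normv a)^-1 * a i) = 1.
Proof.
move=> h; rewrite {1}/normv dot_scale1 dotC dot_scale1 -normv_sq.
by rewrite mulrA -expr2 -exprMn mulVf // expr1n sqrtr1.
Qed.

Lemma spec_bound (R : rcfType) n (T : tensor3 R n) rho a b c :
  symmetric3 T -> is_spectral_norm T rho ->
  `|tri T a b c| <= rho * normv a * normv b * normv c.
Proof.
move=> hs [[u1 [u2 [u3 [_ _ _ hr]]]] hb].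
have r0 : 0 <= rho by rewrite -hr normr_ge0.
have [ha|ha] := eqVneq (normv a) 0.
  by rewrite tri_zero1 ?normr0 ?ha ?mulr0 ?mul0r //; apply: normv_eq0.
have [hb'|hb'] := eqVneq (normv b) 0.
  by rewrite tri_swap12 // tri_zero1 ?normr0 ?hb' ?mulr0 ?mul0r //; apply: normv_eq0.
have [hc|hc] := eqVneq (normv c) 0.
  by rewrite tri_swap23 // tri_swap12 // tri_zero1 ?normr0 ?hc ?mulr0 ?mul0r //; apply: normv_eq0.
have := hb _ _ _ (normv_unit ha) (normv_unit hb') (normv_unit hc).
rewrite -/(tri T _ _ _) tri_scale1 tri_scale2 // tri_scale3 // !normrM.
have pa : 0 < normv a by rewrite lt_def ha normv_ge0.
have pb : 0 < normv b by rewrite lt_def hb' normv_ge0.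
have pc : 0 < normv c by rewrite lt_def hc normv_ge0.
rewrite !normfV !(ger0_norm (normv_ge0 _)).
move=> h.
have -> : `|tri T a b c| = normv a * normv b * normv c *
   ((normv a)^-1 * ((normv b)^-1 * ((normv c)^-1 * `|tri T a b c|))).
  by field; rewrite ha hb' hc.
have -> : rho * normv a * normv b * normv c = normv a * normv b * normv c * rho by ring.
apply: ler_wpM2l => //; rewrite !mulr_ge0 // ltW //.
Qed.


Lemma sym3_tri (R : rcfType) n (T : tensor3 R n) u v : symmetric3 T ->
  inner3 T (sym3 u v v) = tri T u v v.
Proof.
move=> hs.
have -> : inner3 T (sym3 u v v) = 6^-1 * (tri T u v v + tri T u v v + tri T v u v
   + tri T v v u + tri T v u v + tri T v v u).
  rewrite /tri /inner3 -!big_split mulr_sumr; apply eq_bigr => i _.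
  rewrite -!big_split mulr_sumr; apply eq_bigr => j _.
  rewrite -!big_split mulr_sumr; apply eq_bigr => k _.
  rewrite /sym3 /outer3 /=; ring.
rewrite (tri_swap12 v u v hs) (tri_swap23 v v u hs) (tri_swap12 v u v hs).
have h6 : (6 : R) != 0 by rewrite pnatr_eq0.
by field.
Qed.

Lemma cube_sum (R : rcfType) n (f : 'I_n -> R) :
  \sum_(i < n) \sum_(j < n) \sum_(k < n) (f i * f j * f k) = (\sum_(i < n) f i) ^+ 3.
Proof.
rewrite exprS expr2 big_distrl; apply eq_bigr => i _ /=.
rewrite big_distrl mulr_sumr; apply eq_bigr => j _ /=.
rewrite !mulr_sumr; apply eq_bigr => k _ /=; ring.
Qed.

Lemma sum3_lin (R : rcfType) n (A B C : 'I_n -> 'I_n -> 'I_n -> R) p q :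
  \sum_(i < n) \sum_(j < n) \sum_(k < n) (A i j k + p * B i j k + q * C i j k) =
  \sum_(i < n) \sum_(j < n) \sum_(k < n) A i j k
  + p * \sum_(i < n) \sum_(j < n) \sum_(k < n) B i j k
  + q * \sum_(i < n) \sum_(j < n) \sum_(k < n) C i j k.
Proof.
rewrite !mulr_sumr -!big_split; apply eq_bigr => i _.
rewrite !mulr_sumr -!big_split; apply eq_bigr => j _.
rewrite !mulr_sumr -!big_split; apply eq_bigr => k _ //.
Qed.

Lemma norm_expand (R : rcfType) n (T : tensor3 R n) m y :
  inner3 (subT T (scaleT m (cube3 y))) (subT T (scaleT m (cube3 y))) =
  inner3 T T - 2 * m * tri T y y y + m ^+ 2 * (dotv y y) ^+ 3.
Proof.
rewrite /dotv -cube_sum /tri /inner3.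
rewrite (_ : _ - _ = \sum_(i < n) \sum_(j < n) \sum_(k < n) T i j k * T i j k
  + (- (2 * m)) * \sum_(i < n) \sum_(j < n) \sum_(k < n) T i j k * outer3 y y y i j k); last by ring.
rewrite -sum3_lin; apply eq_bigr => i _; apply eq_bigr => j _; apply eq_bigr => k _.
rewrite /subT /scaleT /cube3 /outer3 /=; ring.
Qed.


Lemma dot_lin2 (R : rcfType) n p q (a b b' : vec R n) :
  dotv a (fun i => p * b i + q * b' i) = p * dotv a b + q * dotv a b'.
Proof. rewrite /dotv !mulr_sumr -big_split; apply eq_bigr => i _ /=; ring. Qed.

Lemma rho_ge0 (R : rcfType) n (T : tensor3 R n) rho : is_spectral_norm T rho -> 0 <= rho.
Proof. by move=> [[u1 [u2 [u3 [_ _ _ <-]]]] _]. Qed.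

Lemma crit (R : rcfType) n (T : tensor3 R n) rho x :
  symmetric3 T -> is_spectral_norm T rho -> dotv x x = 1 -> tri T x x x = rho ->
  forall z, tri T x x z = rho * dotv x z.
Proof.
move=> hs hsp hx hxr.
pose g := fun k : 'I_n => \sum_(i < n) \sum_(j < n) T i j k * (x i * x j).
have hg : forall z, tri T x x z = dotv g z.
  move=> z; rewrite triE /dotv.
  rewrite (eq_bigr (fun i => \sum_(k < n) \sum_(j < n) T i j k * (x i * x j * z k))); last first.
    by move=> i _; rewrite exchange_big.
  rewrite exchange_big; apply eq_bigr => k _; rewrite /g big_distrl; apply eq_bigr => i _.
  rewrite big_distrl; apply eq_bigr => j _ /=; ring.
have r0 := rho_ge0 hsp.
have nx : normv x = 1 by rewrite /normv hx sqrtr1.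
have hG : dotv g g <= rho ^+ 2.
  have h1 : dotv g g <= rho * normv g.
    rewrite -hg; apply: le_trans (ler_norm _) _.
    by have := spec_bound x x g hs hsp; rewrite nx !mulr1.
  have q0 := normv_ge0 g; move: h1; rewrite -normv_sq => h1; nra.
have hd : forall k, 1 * g k + (- rho) * x k = 0.
  apply: dot_eq0; apply/eqP; rewrite eq_le dot_ge0 andbT.
  rewrite dot_lin1 dotC dot_lin1 dot_lin2. have e1 : dotv g x = rho by rewrite -hg. rewrite (dotC x g) e1 hx. lra.
move=> z; rewrite hg /dotv mulr_sumr; apply eq_bigr => k _.
have := hd k; rewrite mul1r => /eqP; rewrite addr_eq0 => /eqP ->; ring.
Qed.


Lemma tri_ext3 (R : rcfType) n (T : tensor3 R n) a a' b b' c c' :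
  (forall i, a i = a' i) -> (forall i, b i = b' i) -> (forall i, c i = c' i) ->
  tri T a b c = tri T a' b' c'.
Proof.
move=> ha hb hc; rewrite !triE; apply eq_bigr => i _; apply eq_bigr => j _;
apply eq_bigr => k _; by rewrite ha hb hc.
Qed.

Lemma final_ineq (R : rcfType) (rho c q t A : R) :
  0 < rho -> 0 <= c -> 0 < q -> q ^+ 2 = 1 - c ^+ 2 -> A = q ^+ 2 * t ->
  rho * c = c ^+ 2 * rho + A -> rho / 2 <= `|t| -> False.
Proof.
move=> r0 c0 q0 hq hA he ht.
have q2 : 0 < q ^+ 2 by rewrite exprn_gt0.
have c1 : c < 1.
  rewrite ltNge; apply/negP => hc.
  have : 1 <= c ^+ 2. rewrite expr2; nra.
  lra.
have A0 : 0 <= A.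
  have : 0 <= rho * c * (1 - c) by rewrite !mulr_ge0 ?subr_ge0 // ?ltW.
  move: he; rewrite !expr2 => he; nra.
have t0 : 0 <= t.
  rewrite leNgt; apply/negP => tn.
  have : q ^+ 2 * t < 0 by rewrite pmulr_rlt0.
  lra.
move: ht; rewrite ger0_norm // => ht.
have h : rho / 2 * q ^+ 2 <= A by rewrite hA [q ^+ 2 * t]mulrC ler_pM2r.
rewrite hq in h.
have : 0 < rho * (1 - c) ^+ 2 by rewrite mulr_gt0 // exprn_gt0 // subr_gt0.
move: h he; rewrite !expr2 => h he h2.
nra.
Qed.


Lemma max_unique (R : rcfType) n (T : tensor3 R n) rho (u w : vec R n) :
  symmetric3 T -> is_spectral_norm T rho -> 0 < rho ->
  dotv u u = 1 -> tri T u u u = rho -> nonneg_vec u ->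
  (forall v : vec R n, dotv u v = 0 -> normv v = 1 ->
      rho / 2 <= `|inner3 T (sym3 u v v)|) ->
  nonneg_vec w -> dotv w w = 1 -> tri T w w w = rho -> forall i, w i = u i.
Proof.
move=> hs hsp r0 hu hur un hsig wn hw hwr.
pose c := dotv u w.
have c0 : 0 <= c by apply: sumr_ge0 => i _; apply: mulr_ge0.
pose z := fun i => 1 * w i + (- c) * u i.
have duz : dotv u z = 0 by rewrite dot_lin2 hu /c; ring.
have dzz : dotv z z = 1 - c ^+ 2.
  rewrite dot_lin1 !dot_lin2 hw hu (dotC w u) /c; ring.
have hz : forall i, z i = 1 * w i + - c * u i by [].
clearbody z.
have cu : tri T u u z = 0 by rewrite (crit hs hsp hu hur) duz mulr0.
have cw : tri T w w u = rho * c by rewrite (crit hs hsp hw hwr) dotC.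
have he : rho * c = c ^+ 2 * rho + tri T u z z.
  rewrite -cw (tri_swap23 w w u hs) (tri_swap12 w u w hs).
  rewrite (@tri_ext3 _ _ T u u w (fun i => c * u i + 1 * z i) w (fun i => c * u i + 1 * z i)) //;
    last 1 [by move=> i; rewrite hz; ring]; last by move=> i; rewrite hz; ring.
  rewrite tri_lin2 // !tri_lin3 // hur cu (tri_swap23 u z u hs) cu; ring.
have [z0|z0] := eqVneq (dotv z z) 0.
  have c1 : c = 1.
    move: dzz; rewrite z0 expr2 => h.
    apply/eqP; rewrite eq_le; apply/andP; split; nra.
  move=> i; have := dot_eq0 z0 i; rewrite hz c1; lra.
exfalso.
have nz : normv z != 0.
  by apply/eqP => h; move/eqP: z0; apply; rewrite -normv_sq h expr0n.
have nzp : 0 < normv z by rewrite lt_def nz normv_ge0.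
pose v := fun i => (normv z)^-1 * z i.
have nv : normv v = 1 by apply: normv_unit.
have duv : dotv u v = 0 by rewrite dotC dot_scale1 dotC duz mulr0.
have := hsig v duv nv.
rewrite sym3_tri // tri_scale2 // tri_scale3 //.
apply: (final_ineq r0 c0 nzp); last exact: he.
  by rewrite normv_sq.
by field.
Qed.


Lemma sum3_eq0 (R : rcfType) n (F : 'I_n -> 'I_n -> 'I_n -> R) :
  (forall i j k, 0 <= F i j k) ->
  \sum_(i < n) \sum_(j < n) \sum_(k < n) F i j k = 0 -> forall i j k, F i j k = 0.
Proof.
move=> hF h i j k.
have h1 := @psumr_eq0P _ _ _ (fun i => \sum_(j < n) \sum_(k < n) F i j k)
  (fun i _ => sumr_ge0 _ (fun j _ => sumr_ge0 _ (fun k _ => hF i j k))) h i isT.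
have h2 := @psumr_eq0P _ _ _ (fun j => \sum_(k < n) F i j k)
  (fun j _ => sumr_ge0 _ (fun k _ => hF i j k)) h1 j isT.
exact: (@psumr_eq0P _ _ _ (fun k => F i j k) (fun k _ => hF i j k) h2 k isT).
Qed.

Lemma exists_nz (R : rcfType) n (u : vec R n) : dotv u u = 1 -> exists i, u i != 0.
Proof.
move=> hu; case: (boolP [exists i, u i != 0]) => [/existsP //|/existsPn h].
have : dotv u u = 0 by apply: big1 => i _; move: (h i); rewrite negbK => /eqP ->; rewrite mul0r.
by rewrite hu => /eqP; rewrite oner_eq0.
Qed.

Lemma u_nonneg (R : rcfType) n (T : tensor3 R n) rho (u : vec R n) :
  positive3 T -> is_spectral_norm T rho ->
  dotv u u = 1 -> tri T u u u = rho -> nonneg_vec u.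
Proof.
move=> hp [_ hb] hu hur.
pose a := fun i => `|u i|.
have haa : dotv a a = 1.
  rewrite -hu; apply eq_bigr => i _; rewrite /a -normrM ger0_norm // -expr2 sqr_ge0 //.
have na : normv a = 1 by rewrite /normv haa sqrtr1.
have h1 : tri T a a a - tri T u u u <= 0.
  rewrite hur subr_le0; apply: le_trans (ler_norm _) _; exact: hb.
have hD : tri T a a a - tri T u u u =
  \sum_(i < n) \sum_(j < n) \sum_(k < n) T i j k * (a i * a j * a k - u i * u j * u k).
  rewrite !triE -sumrB; apply eq_bigr => i _; rewrite -sumrB; apply eq_bigr => j _.
  rewrite -sumrB; apply eq_bigr => k _; ring.
have hge : forall i j k, 0 <= T i j k * (a i * a j * a k - u i * u j * u k).
  move=> i j k; apply: mulr_ge0; first exact: ltW.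
  by rewrite subr_ge0 /a -!normrM ler_norm.
have D0 : tri T a a a - tri T u u u = 0.
  apply/eqP; rewrite eq_le h1 /= [X in _ <= X]hD.
  by apply: sumr_ge0 => i _; apply: sumr_ge0 => j _; apply: sumr_ge0 => k _; exact: hge.
rewrite hD in D0.
have hz := sum3_eq0 hge D0.
have [i hi] := exists_nz hu.
move=> k; have := hz i i k; move/eqP; rewrite mulf_eq0 (gt_eqF (hp i i k)) /= /a.
have : 0 < u i * u i by rewrite -expr2 lt_def sqrf_eq0 hi sqr_ge0.
move=> hii.
rewrite subr_eq0 -normrM (ger0_norm (ltW hii)) => /eqP h.
have : `|u k| = u k by apply: (mulfI (lt0r_neq0 hii)).
move=> <-; exact: normr_ge0.
Qed.


Lemma rho_pos (R : rcfType) n (T : tensor3 R n) rho (u : vec R n) :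
  positive3 T -> nonneg_vec u -> dotv u u = 1 -> tri T u u u = rho -> 0 < rho.
Proof.
move=> hp un hu hur.
have hge : forall i j k, 0 <= T i j k * (u i * u j * u k).
  by move=> i j k; apply: mulr_ge0; [exact: ltW | apply: mulr_ge0; [apply: mulr_ge0|]].
have r0 : 0 <= rho.
  by rewrite -hur triE; apply: sumr_ge0 => i _; apply: sumr_ge0 => j _; apply: sumr_ge0.
rewrite lt_def r0 andbT; apply/eqP => h.
rewrite h triE in hur.
have [i hi] := exists_nz hu.
have := sum3_eq0 hge hur i i i; move/eqP; rewrite mulf_eq0 (gt_eqF (hp i i i)) /=.
by rewrite !mulf_eq0 (negbTE hi).
Qed.

Lemma inner3_ge0 (R : rcfType) n (X : tensor3 R n) : 0 <= inner3 X X.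
Proof.
by apply: sumr_ge0 => i _; apply: sumr_ge0 => j _; apply: sumr_ge0 => k _; rewrite -expr2 sqr_ge0.
Qed.

Lemma key_id (R : rcfType) n (T : tensor3 R n) rho m (y : vec R n) :
  inner3 (subT T (scaleT m (cube3 y))) (subT T (scaleT m (cube3 y))) - (inner3 T T - rho ^+ 2)
  = (m * normv y ^+ 3 - rho) ^+ 2 + 2 * (m * (rho * normv y ^+ 3 - tri T y y y)).
Proof. rewrite norm_expand -normv_sq; ring. Qed.

Lemma Fbound (R : rcfType) n (T : tensor3 R n) rho (y : vec R n) :
  symmetric3 T -> is_spectral_norm T rho -> tri T y y y <= rho * normv y ^+ 3.
Proof.
move=> hs hsp; apply: le_trans (ler_norm _) _.
by have := spec_bound y y y hs hsp; rewrite !exprS expr0 mulr1 !mulrA.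
Qed.


Theorem mainTheorem11 (R : rcfType) (n : nat) (T : tensor3 R n) (u : vec R n) (rho : R) :
  symmetric3 T -> positive3 T ->
  normv u = 1 ->
  inner3 T (cube3 u) = rho ->
  is_spectral_norm T rho ->
  (forall v : vec R n, dotv u v = 0 -> normv v = 1 ->
      rho / 2 <= `|inner3 T (sym3 u v v)|) ->
  unique_best_nn_rank1 T.
Proof.
move=> hs hp hn hur hsp hsig.
have hu : dotv u u = 1 by rewrite -normv_sq hn expr1n.
have hur' : tri T u u u = rho by [].
have un := u_nonneg hp hsp hu hur'.
have r0 := rho_pos hp un hu hur'.
have Nrho : inner3 (subT T (scaleT rho (cube3 u))) (subT T (scaleT rho (cube3 u)))
   = inner3 T T - rho ^+ 2.
  by rewrite norm_expand hu hur'; ring.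
have best : best_nn_rank1 T rho u.
  split => //; first exact: ltW.
  move=> m y m0 yn; rewrite /normT ler_sqrt ?inner3_ge0 // Nrho -subr_ge0 key_id.
  apply: addr_ge0; first exact: sqr_ge0.
  apply: mulr_ge0 => //; apply: mulr_ge0 => //; rewrite subr_ge0; exact: Fbound.
exists rho, u; split => // m y [m0 yn hb].
have := hb rho u (ltW r0) un.
rewrite /normT ler_sqrt ?inner3_ge0 // Nrho -subr_le0 key_id => h.
set s := normv y in h.
have F0 := Fbound y hs hsp.
have Y0 : 0 <= m * (rho * s ^+ 3 - tri T y y y).
  by apply: mulr_ge0 => //; rewrite subr_ge0.
have X0 := sqr_ge0 (m * s ^+ 3 - rho).
have e1 : m * s ^+ 3 = rho.
  have : (m * s ^+ 3 - rho) ^+ 2 = 0.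
    by apply/eqP; rewrite eq_le; apply/andP; split; lra.
  by move/eqP; rewrite sqrf_eq0 subr_eq0 => /eqP.
have e2 : m * (rho * s ^+ 3 - tri T y y y) = 0.
  by apply/eqP; rewrite eq_le; apply/andP; split; lra.
have mn0 : m != 0 by apply/eqP => h0; move: e1; rewrite h0 mul0r => h1; rewrite -h1 ltxx in r0.
have sn0 : s != 0 by apply/eqP => h0; move: e1; rewrite h0 expr0n mulr0 => h1; rewrite -h1 ltxx in r0.
have eF : tri T y y y = rho * s ^+ 3.
  by move/eqP: e2; rewrite mulf_eq0 (negbTE mn0) /= subr_eq0 => /eqP ->.
pose w := fun i => s^-1 * y i.
have nw : normv w = 1 by apply: normv_unit.
have hw : dotv w w = 1 by rewrite -normv_sq nw expr1n.
have wn : nonneg_vec w.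
  move=> i; apply: mulr_ge0 => //; rewrite invr_ge0; exact: normv_ge0.
have hwr : tri T w w w = rho.
  rewrite tri_scale1 tri_scale2 // tri_scale3 // eF; by field.
have wu := max_unique hs hsp r0 hu hur' un hsig wn hw hwr.
have yu : forall i, y i = s * u i.
  by move=> i; rewrite -wu /w mulrA mulfV // mul1r.
move=> i j k; rewrite /scaleT /cube3 /outer3 !yu -e1; ring.
Qed.
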